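(* Assume the standing setting below and run the DMFW algorithm with $\eta_k=\frac{2}{k+2}$ (and any $\gamma_k\in(0,1]$). Then for every $i\in\mathcal N$ and $k\ge1$, $$\|\hat x_k^i-\bar x_k\|\le\frac{2C_1}{k+2},\qquad C_1=k_0\sqrt nD.$$
   Context: Setting. There are $n$ agents $\mathcal N=\{1,\dots,n\}$ connected by a connected graph $\mathcal G=(\mathcal N,\mathcal E)$ with weight matrix $C=[c_{ij}]\in\mathbb R^{n\times n}$, where $c_{ij}\ge 0$ and $c_{ij}=0$ whenever $j\ne i$ and $(i,j)\notin\mathcal E$. $C$ is doubly stochastic, i.e. all row sums and all column sums equal $1$. Let $\lambda$ be the second largest eigenvalue of $C$ in magnitude. It is assumed that $|\lambda|<1$ and that for all vectors $x^1,\dots,x^n\in\mathbb R^p$, with $\bar x=\frac1n\sum_i x^i$ and $\hat x^i=\sum_j c_{ij}x^j$, one has $\big(\sum_i\|\hat x^i-\bar x\|^2\big)^{1/2}\le|\lambda|\big(\sum_i\|x^i-\bar x\|^2\big)^{1/2}$. Let $k_0$ be the smallest positive integer with $|\lambda|\le (k_0/(k_0+1))^2$. Problem data. $\mathcal X\subset\mathbb R^p$ is convex and compact with diameter $D$, i.e. $\|x-x'\|\le D$ for all $x,x'\in\mathcal X$. For each $i$, $\xi^i$ is a random variable. The function $f_i(\cdot,\xi)$ is differentiable with $L$-Lipschitz gradient for every $\xi$. $F_i(x)=\mathbb E[f_i(x,\xi^i)]$ is differentiable with $\nabla F_i(x)=\mathbb E[\nabla f_i(x,\xi^i)]$ and $L$-Lipschitz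 gradient. For all $x\in\mathcal X$ and $i$, $\mathbb E\|\nabla F_i(x)-\nabla f_i(x,\xi^i)\|^2\le\delta^2$. Set $F=\frac1n\sum_{i=1}^nF_i$. DMFW algorithm. Fix step sizes $\gamma_k,\eta_k\in(0,1]$ and deterministic initial points $x_1^i\in\mathcal X$. The samples $\xi_k^i$ ($k\ge1$, $i\in\mathcal N$) are mutually independent, and $\xi_k^i$ has the distribution of $\xi^i$. For $k=1,2,\dots$ and each $i$: - $\hat x_k^i=\sum_{j=1}^n c_{ij}x_k^j$. - For $k=1$: $y_1^i=s_1^i=\nabla f_i(\hat x_1^i,\xi_1^i)$. For $k\ge2$: $y_k^i=(1-\gamma_k)y_{k-1}^i+\nabla f_i(\hat x_k^i,\xi_k^i)-(1-\gamma_k)\nabla f_i(\hat x_{k-1}^i,\xi_k^i)$ and $s_k^i=\sum_j c_{ij}s_{k-1}^j+y_k^i-y_{k-1}^i$. - $p_k^i=\sum_j c_{ij}s_k^j$. - $\theta_k^i\in\arg\min_{\phi\in\mathcal X}\langle p_k^i,\phi\rangle$. - $x_{k+1}^i=\hat x_k^i+\eta_k(\theta_k^i-\hat x_k^i)$. Notation: $\bar x_k=\frac1n\sum_i x_k^i$. *)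

(* Defs.v *)
From HB Require Import structures.
From mathcomp Require Import all_boot all_order all_algebra.
From mathcomp Require Import complex.
From mathcomp Require Import all_classical all_reals all_analysis.
Set Implicit Arguments. Unset Strict Implicit. Unset Printing Implicit Defensive.
Import Order.TTheory GRing.Theory Num.Theory.
Import numFieldNormedType.Exports.
Local Open Scope ring_scope.

Definition edot {R : realType} {p : nat} (u v : 'rV[R]_p) : R :=
  \sum_(j < p) u 0 j * v 0 j.
Definition enorm {R : realType} {p : nat} (u : 'rV[R]_p) : R :=
  Num.sqrt (\sum_(j < p) u 0 j ^+ 2).

Definition avg {R : realType} {n p : nat} (x : 'I_n -> 'rV[R]_p) : 'rV[R]_p :=
  (n%:R)^-1 *: \sum_(i < n) x i.

Definition mix {R : realType} {n p : nat} (C : 'M[R]_n) (x : 'I_n -> 'rV[R]_p)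
  (i : 'I_n) : 'rV[R]_p := \sum_(j < n) C i j *: x j.

Definition convex_subset {R : realType} {p : nat} (X : set 'rV[R]_p) : Prop :=
  forall x y t, X x -> X y -> 0 <= t -> t <= 1 -> X (t *: x + (1 - t) *: y).

Definition connected_graph {n : nat} (E : rel 'I_n) : Prop :=
  symmetric E /\ irreflexive E /\ forall i j, connect E i j.

(* mu is the modulus |lambda| of the second largest (in magnitude) eigenvalue
   of C: the eigenvalues of C (complex, with multiplicity) are the roots
   s of its characteristic polynomial; mu is the second entry of the list of
   their moduli sorted in nonincreasing order. *)
Definition second_eig_modulus {R : realType} {n : nat} (C : 'M[R]_n) (mu : R)
  : Prop :=
  exists s : seq R[i],
    map_poly (real_complex R) (char_poly C) = \prod_(z <- s) ('X - z%:P)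
    /\ mu = nth 0 (sort (fun a b : R => b <= a) [seq Normc.normc z | z <- s]) 1.

(* Main.v *)
Require Import Defs.
From HB Require Import structures.
From mathcomp Require Import all_boot all_order all_algebra.
From mathcomp Require Import complex.
From mathcomp Require Import all_classical all_reals all_analysis.
Import Order.TTheory GRing.Theory Num.Theory.
Import numFieldNormedType.Exports.
Local Open Scope ring_scope.

From mathcomp Require Import ring lra.

Section Aux.
Local Set Implicit Arguments. Local Unset Strict Implicit.
Variable R : realType.
Definition nrm {I : finType} (u : I -> R) := Num.sqrt (\sum_i u i ^+ 2).

Lemma sumsq_ge0 (I : finType) (u : I -> R) : 0 <= \sum_i u i ^+ 2.
Proof. by apply: sumr_ge0 => i _; apply: sqr_ge0. Qed.

Lemma nrm_ge0 (I : finType) (u : I -> R) : 0 <= nrm u.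
Proof. exact: sqrtr_ge0. Qed.

Lemma nrm_sq (I : finType) (u : I -> R) : nrm u ^+ 2 = \sum_i u i ^+ 2.
Proof. by rewrite /nrm sqr_sqrtr // sumsq_ge0. Qed.

Lemma nrm_ext (I : finType) (u v : I -> R) : (forall i, u i = v i) -> nrm u = nrm v.
Proof. by move=> h; rewrite /nrm; congr Num.sqrt; apply: eq_bigr => i _; rewrite h. Qed.

Lemma nrm0_eq (I : finType) (u : I -> R) : nrm u = 0 -> forall i, u i = 0.
Proof.
move=> h i.
have h2 : \sum_i u i ^+ 2 = 0 by rewrite -nrm_sq h expr0n.
have := @psumr_eq0P _ _ xpredT (fun i => u i ^+ 2) (fun i _ => sqr_ge0 (u i)) h2 i isT.
by move/eqP; rewrite sqrf_eq0 => /eqP.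
Qed.

Lemma CS (I : finType) (u v : I -> R) : \sum_i u i * v i <= nrm u * nrm v.
Proof.
have [A0|Apos] := eqVneq (nrm u) 0.
  rewrite A0 mul0r big1 // => i _; by rewrite (nrm0_eq A0) mul0r.
have [B0|Bpos] := eqVneq (nrm v) 0.
  rewrite B0 mulr0 big1 // => i _; by rewrite (nrm0_eq B0) mulr0.
have hA : 0 < nrm u by rewrite lt_def Apos nrm_ge0.
have hB : 0 < nrm v by rewrite lt_def Bpos nrm_ge0.
set A := nrm u in hA *; set B := nrm v in hB *.
have key : (2 * A * B) * \sum_i u i * v i <= (2 * A * B) * (A * B).
  rewrite mulr_sumr.
  rewrite (_ : 2 * A * B * (A * B) = \sum_i (B ^+ 2 * u i ^+ 2 + A ^+ 2 * v i ^+ 2)).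
    apply: ler_sum => i _.
    have := sqr_ge0 (B * u i - A * v i); nra.
  rewrite big_split /= -!mulr_sumr -!nrm_sq -/A -/B; ring.
by rewrite ler_pM2l in key; rewrite ?mulr_gt0.
Qed.

Lemma minkowski (I : finType) (u v : I -> R) :
  nrm (fun i => u i + v i) <= nrm u + nrm v.
Proof.
rewrite -[X in _ <= X]ger0_norm ?addr_ge0 ?nrm_ge0 // -sqrtr_sqr.
rewrite /nrm ler_sqrt ?sqr_ge0 //.
have -> : \sum_i (u i + v i) ^+ 2
   = \sum_i u i ^+ 2 + 2 * \sum_i u i * v i + \sum_i v i ^+ 2.
  by rewrite mulr_sumr -!big_split /=; apply: eq_bigr => i _; ring.
rewrite -!/(nrm _) -!nrm_sq; have := CS u v; nra.
Qed.

Lemma nrm_scale (I : finType) (c : R) (u : I -> R) :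
  nrm (fun i => c * u i) = `|c| * nrm u.
Proof.
rewrite /nrm (_ : \sum_i (c * u i) ^+ 2 = c ^+ 2 * \sum_i u i ^+ 2).
  by rewrite sqrtrM ?sqr_ge0 // sqrtr_sqr.
by rewrite mulr_sumr; apply: eq_bigr => i _; rewrite exprMn.
Qed.

Lemma nrm_lin (I : finType) (a b : R) (u v : I -> R) :
  nrm (fun i => a * u i + b * v i) <= `|a| * nrm u + `|b| * nrm v.
Proof.
apply: le_trans (minkowski _ _) _.
by rewrite !nrm_scale.
Qed.

Lemma nrm_sum (I J : finType) (r : seq J) (f : J -> I -> R) :
  nrm (fun i => \sum_(l <- r) f l i) <= \sum_(l <- r) nrm (f l).
Proof.
elim: r => [|a r IH].
  rewrite big_nil (nrm_ext (v := fun _ => 0)) => [|i]; last by rewrite big_nil.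
  by rewrite /nrm big1 ?sqrtr0 // => i _; rewrite expr0n.
rewrite big_cons (nrm_ext (v := fun i => f a i + \sum_(l <- r) f l i)) => [|i];
  last by rewrite big_cons.
apply: le_trans (minkowski _ _) _; exact: lerD.
Qed.

Lemma nrm_comp (I : finType) (u : I -> R) i : `|u i| <= nrm u.
Proof.
rewrite -sqrtr_sqr /nrm; apply: ler_wsqrtr.
rewrite (bigD1 i) //= lerDl; apply: sumr_ge0 => j _; exact: sqr_ge0.
Qed.

Lemma nrm_bound (I : finType) (u : I -> R) (D : R) :
  0 <= D -> (forall i, `|u i| <= D) -> nrm u <= Num.sqrt (#|I|%:R) * D.
Proof.
move=> D0 h.
rewrite -[D in _ * D]ger0_norm // -sqrtr_sqr -sqrtrM ?ler0n // /nrm.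
apply: ler_wsqrtr.
rewrite -sum1_card natr_sum mulr_suml; apply: ler_sum => i _.
have := h i; rewrite ler_norml => /andP[h1 h2]; nra.
Qed.

End Aux.

Section Vec.
Variable R : realType.

Lemma enormE p (u : 'rV[R]_p) : enorm u = nrm (fun j => u 0 j).
Proof. by []. Qed.

Lemma avgE n p (u : 'I_n -> 'rV[R]_p) j : avg u 0 j = n%:R^-1 * \sum_i u i 0 j.
Proof. by rewrite /avg !mxE summxE. Qed.

Lemma mixE n p (C : 'M[R]_n) (u : 'I_n -> 'rV[R]_p) i j :
  mix C u i 0 j = \sum_l C i l * u l 0 j.
Proof. by rewrite /mix summxE; apply: eq_bigr => l _; rewrite mxE. Qed.

Lemma stack n p (a : 'I_n -> 'rV[R]_p) :
  nrm (fun i => enorm (a i)) = nrm (fun ij : 'I_n * 'I_p => a ij.1 0 ij.2).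
Proof.
rewrite /nrm; congr Num.sqrt.
rewrite [RHS](_ : _ = \sum_i \sum_j a i 0 j ^+ 2); last by rewrite pair_bigA.
by apply: eq_bigr => i _; rewrite /enorm sqr_sqrtr // sumsq_ge0.
Qed.

Lemma avg_dev n p (Hn : (0 < n)%N) (z : 'I_n -> 'rV[R]_p) D :
  (forall i l, enorm (z i - z l) <= D) -> forall i, enorm (z i - avg z) <= D.
Proof.
move=> h i; rewrite enormE.
have hn : (n%:R : R) != 0 by rewrite pnatr_eq0 -lt0n.
rewrite (nrm_ext (v := fun j => n%:R^-1 * \sum_l (z i - z l) 0 j)) => [|j].
  rewrite nrm_scale.
  apply: le_trans (ler_wpM2l (normr_ge0 _) (nrm_sum _ _)) _.
  apply: le_trans (ler_wpM2l (normr_ge0 _) (ler_sum _ (fun l _ => h i l))) _.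
  rewrite sumr_const card_ord ger0_norm ?invr_ge0 ?ler0n //.
  by rewrite -[D *+ n]mulr_natr mulrCA mulVf ?mulr1.
rewrite !mxE summxE [X in _ = _ * X](eq_bigr (fun l => z i 0 j - z l 0 j)) => [|l _]; last by rewrite !mxE.
rewrite sumrB sumr_const card_ord -mulr_natl.
by field.
Qed.

End Vec.

Lemma num_base (R : realType) (m a Q : R) : 0 <= m -> m * (a + 1) ^+ 2 <= a ^+ 2 -> 1 <= a -> 0 <= Q ->
  m * Q <= 2 * (a * Q) / (1 + 2).
Proof.
move=> hm0 hm ha hQ.
have h3 : 3 * m <= 2 * a.
  have hp : 0 < (a + 1) ^+ 2 by apply: exprn_gt0; lra.
  rewrite -(ler_pM2l hp).
  have : 3 * a ^+ 2 <= 2 * a * (a + 1) ^+ 2 by nra.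
  nra.
rewrite ler_pdivlMr; last lra.
nra.
Qed.

Lemma num_step (R : realType) (m a Q K S : R) : 0 <= m -> m * (a + 1) ^+ 2 <= a ^+ 2 -> 1 <= a -> 0 <= Q ->
  1 <= K -> S <= 2 * (a * Q) / (K + 2) ->
  m * ((1 - 2 / (K + 2)) * S + 2 / (K + 2) * Q) <= 2 * (a * Q) / (K + 1 + 2).
Proof.
move=> hm0 hm ha hQ hK hS.
have hK2 : 0 < K + 2 by lra.
have he : 0 <= 1 - 2 / (K + 2).
  rewrite subr_ge0 ler_pdivrMr //; lra.
have h1 : (1 - 2 / (K + 2)) * S + 2 / (K + 2) * Q <= 2 * Q * (a * K + K + 2) / (K + 2) ^+ 2.
  apply: le_trans (lerD (ler_wpM2l he hS) (lexx _)) _.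
  rewrite le_eqVlt; apply/orP; left; apply/eqP; field; lra.
apply: le_trans (ler_wpM2l hm0 h1) _.
set P := (a * K + K + 2) * (K + 3).
have hP : 0 <= P by rewrite /P; apply: mulr_ge0; nra.
have hc : m * P <= a * (K + 2) ^+ 2.
  have hp : 0 < (a + 1) ^+ 2 by apply: exprn_gt0; lra.
  rewrite -(ler_pM2l hp).
  have h2 : m * (a + 1) ^+ 2 * P <= a ^+ 2 * P by apply: ler_wpM2r.
  have h3 : a ^+ 2 * P <= (a + 1) ^+ 2 * (a * (K + 2) ^+ 2).
    rewrite /P.
    have ha0 : 0 <= a by lra.
    have hK0 : 0 <= K by lra.
    have : 0 <= a * ((a + 1) * K ^+ 2 + ((a + 1) * (a + 4) - 2 * a) * K + 4 * a ^+ 2 + 2 * a + 4).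
      apply: mulr_ge0 => //.
      have : 0 <= a * a by nra.
      nra.
    move=> H; nra.
  nra.
have -> : m * (2 * Q * (a * K + K + 2) / (K + 2) ^+ 2) = 2 * Q * (m * P) / ((K + 2) ^+ 2 * (K + 3)).
  rewrite /P; field; lra.
rewrite ler_pdivrMr; last by apply: mulr_gt0; [apply: exprn_gt0|]; lra.
rewrite (_ : 2 * (a * Q) / (K + 1 + 2) * ((K + 2) ^+ 2 * (K + 3)) = 2 * Q * (a * (K + 2) ^+ 2)); last by field; lra.
apply: ler_wpM2l => //; lra.
Qed.

Theorem lemma1
  (R : realType) (n p : nat) (Hn : (0 < n)%N)
  (* communication graph and weight matrix *)
  (E : rel 'I_n) (HE : connected_graph E)
  (C : 'M[R]_n)
  (HCnn : forall i j, 0 <= C i j)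
  (HCedge : forall i j, i != j -> ~~ E i j -> C i j = 0)
  (HCrow : forall i, \sum_(j < n) C i j = 1)
  (HCcol : forall j, \sum_(i < n) C i j = 1)
  (mu : R) (* mu = |lambda| *)
  (Hmu : second_eig_modulus C mu) (Hmu1 : mu < 1)
  (Hcontr : forall x : 'I_n -> 'rV[R]_p,
     Num.sqrt (\sum_(i < n) enorm (mix C x i - avg x) ^+ 2)
       <= mu * Num.sqrt (\sum_(i < n) enorm (x i - avg x) ^+ 2))
  (k0 : nat) (Hk0pos : (0 < k0)%N)
  (Hk0 : mu <= (k0%:R / k0.+1%:R) ^+ 2)
  (Hk0min : forall k : nat, (0 < k)%N -> mu <= (k%:R / k.+1%:R) ^+ 2 -> (k0 <= k)%N)
  (* constraint set *)
  (X : set 'rV[R]_p) (HXconv : convex_subset X) (HXcomp : compact X)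
  (D : R) (HD : forall x x', X x -> X x' -> enorm (x - x') <= D)
  (* local (sampled) objectives and their gradients *)
  (Xi : Type) (L : R)
  (f : 'I_n -> 'rV[R]_p -> Xi -> R) (gf : 'I_n -> 'rV[R]_p -> Xi -> 'rV[R]_p)
  (Hfdiff : forall i xi x, differentiable (fun y => f i y xi) x)
  (Hfgrad : forall i xi x v, 'D_v (fun y => f i y xi) x = edot (gf i x xi) v)
  (HfL : forall i xi x y, enorm (gf i x xi - gf i y xi) <= L * enorm (x - y))
  (* an arbitrary realization of the samples xi_k^i *)
  (xi : nat -> 'I_n -> Xi)
  (* step sizes *)
  (gamma : nat -> R) (Hgamma : forall k, (1 <= k)%N -> 0 < gamma k <= 1)
  (eta : nat -> R) (Heta : forall k, eta k = 2 / (k%:R + 2))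
  (* the DMFW iterates (indices k >= 1) *)
  (x xhat y s pp theta : nat -> 'I_n -> 'rV[R]_p)
  (Hx1 : forall i, X (x 1%N i))
  (Hxhat : forall k i, (1 <= k)%N -> xhat k i = mix C (x k) i)
  (Hy1 : forall i, y 1%N i = gf i (xhat 1%N i) (xi 1%N i))
  (Hs1 : forall i, s 1%N i = y 1%N i)
  (Hy : forall k i, (2 <= k)%N ->
     y k i = (1 - gamma k) *: y k.-1 i + gf i (xhat k i) (xi k i)
             - (1 - gamma k) *: gf i (xhat k.-1 i) (xi k i))
  (Hs : forall k i, (2 <= k)%N -> s k i = mix C (s k.-1) i + y k i - y k.-1 i)
  (Hp : forall k i, (1 <= k)%N -> pp k i = mix C (s k) i)
  (Htheta : forall k i, (1 <= k)%N ->
     X (theta k i) /\ forall phi, X phi -> edot (pp k i) (theta k i) <= edot (pp k i) phi)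
  (Hxnext : forall k i, (1 <= k)%N ->
     x k.+1 i = xhat k i + eta k *: (theta k i - xhat k i)) :
  forall (i : 'I_n) (k : nat), (1 <= k)%N ->
    enorm (xhat k i - avg (x k))
      <= 2 * (k0%:R * Num.sqrt n%:R * D) / (k%:R + 2).
Proof.
move=> i k hk.
have i0 : 'I_n := Ordinal Hn.
have D0 : 0 <= D by apply: le_trans (HD _ _ (Hx1 i0) (Hx1 i0)); exact: sqrtr_ge0.
set Q := Num.sqrt n%:R * D.
have Q0 : 0 <= Q by apply: mulr_ge0 => //; exact: sqrtr_ge0.
set a : R := k0%:R.
have ha : 1 <= a by rewrite /a ler1n.
set m := Num.max mu 0.
have hm0 : 0 <= m by rewrite /m le_max lexx orbT.
have hm : m * (a + 1) ^+ 2 <= a ^+ 2.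
  have hp : 0 < (a + 1) ^+ 2 by apply: exprn_gt0; lra.
  rewrite -ler_pdivlMr // ge_max; apply/andP; split; last first.
    by apply: divr_ge0; [apply: sqr_ge0|apply: ltW].
  by move: Hk0; rewrite expr_div_n /a -natr1.
pose Sv k := nrm (fun i => enorm (xhat k i - avg (x k))).
pose Uv k := nrm (fun i => enorm (x k i - avg (x k))).
have F1 : forall k, (1 <= k)%N -> Sv k <= m * Uv k.
  move=> l hl.
  have -> : Sv l = Num.sqrt (\sum_(i < n) enorm (mix C (x l) i - avg (x l)) ^+ 2).
    by rewrite /Sv /nrm; congr Num.sqrt; apply: eq_bigr => j _; rewrite Hxhat.
  apply: le_trans (Hcontr (x l)) _.
  by apply: ler_wpM2r; [exact: nrm_ge0|rewrite le_max lexx].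
have bndQ : forall z : 'I_n -> 'rV[R]_p, (forall i, X (z i)) ->
    nrm (fun i => enorm (z i - avg z)) <= Q.
  move=> z hz; rewrite /Q -[in X in _ <= X * _](card_ord n).
  apply: nrm_bound => // j; rewrite ger0_norm; last exact: sqrtr_ge0.
  by apply: avg_dev => // l l'; apply: HD.
have F2 : Uv 1%N <= Q by apply: bndQ.
have sumhat : forall l j, (1 <= l)%N -> \sum_i xhat l i 0 j = \sum_i x l i 0 j.
  move=> l j hl.
  rewrite (eq_bigr (fun i => \sum_l' C i l' * x l l' 0 j)) => [|i' _]; last by rewrite Hxhat // mixE.
  rewrite exchange_big /=; apply: eq_bigr => l' _.
  by rewrite -mulr_suml HCcol mul1r.
have F3 : forall l, (1 <= l)%N -> Uv l.+1 <= (1 - eta l) * Sv l + eta l * Q.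
  move=> l hl.
  have hl0 : (0:R) <= l%:R := ler0n _ _.
  have he0 : 0 <= eta l by rewrite Heta; apply: divr_ge0; lra.
  have he1 : 0 <= 1 - eta l.
    rewrite Heta subr_ge0 ler_pdivrMr; lra.
  rewrite /Uv /Sv stack.
  rewrite (nrm_ext (v := fun ij : 'I_n * 'I_p =>
      (1 - eta l) * (xhat l ij.1 - avg (x l)) 0 ij.2
      + eta l * (theta l ij.1 - avg (theta l)) 0 ij.2)) => [|[i' j]].
    apply: le_trans (nrm_lin _ _ _ _) _.
    rewrite -(@stack _ _ _ (fun i => xhat l i - avg (x l))) -(@stack _ _ _ (fun i => theta l i - avg (theta l))) !ger0_norm //; apply: lerD => //.
    apply: ler_wpM2l => //; apply: bndQ => i'; exact: (Htheta l i' hl).1.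
  rewrite /= !mxE !summxE.
  have hsum : \sum_i0 x l.+1 i0 0 j
      = \sum_i0 x l i0 0 j + eta l * (\sum_i0 theta l i0 0 j - \sum_i0 x l i0 0 j).
    rewrite -(sumhat l j hl) (eq_bigr (fun i0 => xhat l i0 0 j + eta l * (theta l i0 0 j - xhat l i0 0 j)))
      => [|i1 _]; last by rewrite Hxnext // !mxE.
    by rewrite big_split /= -mulr_sumr sumrB.
  rewrite hsum -(sumhat l j hl) Hxnext // !mxE; ring.
have main : forall j, Sv j.+1 <= 2 * (a * Q) / (j.+1%:R + 2).
  elim=> [|j IH].
    apply: le_trans (F1 1%N isT) _.
    apply: le_trans (ler_wpM2l hm0 F2) _.
    by apply: num_base.
  apply: le_trans (F1 j.+2 isT) _.
  apply: le_trans (ler_wpM2l hm0 (F3 j.+1 isT)) _.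
  rewrite Heta.
  have -> : (j.+2%:R : R) = j.+1%:R + 1 by rewrite natr1.
  by apply: num_step => //; rewrite ler1n.
case: k hk => // j _.
have e : a * Q = a * Num.sqrt n%:R * D by rewrite /Q mulrA.
rewrite -e; apply: le_trans (main j).
rewrite /Sv; apply: le_trans (nrm_comp _ i).
by rewrite ger0_norm //; exact: sqrtr_ge0.
Qed.
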